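(* Let $\{T^k\}_k$ and $(\mathbf{P}_t)_t$ satisfy the standing assumptions (i) and (ii), and let $\pi$ be a probability distribution on $\mathcal{S}$. Then there exists a sequence of root estimators that is consistent for $\{T^k\}_k$, $(\mathbf{P}_t)_t$ and $\pi$ if and only if for all $i\ne j\in\mathcal{S}$ with $\pi(i)\wedge\pi(j)>0$, $$\liminf_{k\to\infty}\|\mathcal{L}^i_{T^k}-\mathcal{L}^j_{T^k}\|_{\mathrm{TV}}=1.$$
   Context: Trees: finite rooted trees $T=(V,E,\rho,\ell)$ with positive edge lengths, viewed as metric objects; leaves $\partial T$. Markov process on countable $\mathcal{S}$ with transition matrices $\mathbf{P}_t=(p_{ij}(t))$ and stable conservative $Q$-matrix. A $\mathbf{P}_t$-chain on $T$: root state $X_\rho$, then along each edge $(u,v)$ run the chain from $X_u$ for time $\ell_{(u,v)}$, independently on outgoing edges given the branching state. $\mathbb{P}^i$, $\mathbb{P}^\pi$: laws with root state $i$, resp. drawn from $\pi$. $\mathcal{L}^i_T$ denotes the law of the leaf states $(X_u)_{u\in\partial T}$ under $\mathbb{P}^i$. Standing assumptions: $\{T^k\}$ nested with common root ($T^{k-1}$ is the restriction of $T^k$ to a subset of its leaves), $|\partial T^k|=k$; (i) uniformly bounded height; (ii) for every $t$ the rows of $\mathbf{P}_t$ are distinct. $X^k$ is a $\mathbf{P}_t$-chain on $T^k$ with root distribution $\pi$; root estimators $F_k:\mathcal{S}^{\partial T^k}\to\mathcal{S}$ are consistent if $\liminf_k\mathbb{P}^\pi[F_k(X^k_{\partial T^k})=X^k_\rho]=1$.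 TV distance $\|\mu_1-\mu_2\|_{\mathrm{TV}}=\frac12\sum_\sigma|\mu_1(\sigma)-\mu_2(\sigma)|$. *)

(* Defs.v *)
From Stdlib Require Import Reals Lra Lia List Classical ClassicalEpsilon.
Import ListNotations.
Open Scope R_scope.

(* A countable type S is given together with an injection [enc : S -> nat].
   [termS enc f n] is f(s) if n = enc s, and 0 if n is not in the image. *)
Definition termS {S : Type} (enc : S -> nat) (f : S -> R) (n : nat) : R :=
  match excluded_middle_informative (exists s, enc s = n) with
  | left H => f (proj1_sig (constructive_indefinite_description _ H))
  | right _ => 0
  end.

Definition has_sumS {S : Type} (enc : S -> nat) (f : S -> R) (l : R) : Prop :=
  infinite_sum (termS enc f) l.

(* value of the sum (used only for non-negative summable families, where the
   sum is well defined and independent of the enumeration) *)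
Definition sumS {S : Type} (enc : S -> nat) (f : S -> R) : R :=
  epsilon (inhabits 0) (fun l => has_sumS enc f l).

(* sum over configurations sigma in S^n (lists of length n), as an iterated
   sum (equal to the full sum for non-negative summands, by Tonelli) *)
Fixpoint sumSn {S : Type} (enc : S -> nat) (n : nat) (F : list S -> R) : R :=
  match n with
  | O => F []
  | Datatypes.S n' => sumS enc (fun s => sumSn enc n' (fun r => F (s :: r)))
  end.

Definition tv {S : Type} (enc : S -> nat) (n : nat) (mu nu : list S -> R) : R :=
  / 2 * sumSn enc n (fun sigma => Rabs (mu sigma - nu sigma)).

Definition is_distr {S : Type} (enc : S -> nat) (pi : S -> R) : Prop :=
  (forall i, 0 <= pi i) /\ has_sumS enc pi 1.

Definition delta {S : Type} (i j : S) : R :=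
  if excluded_middle_informative (i = j) then 1 else 0.

Definition is_markov_semigroup {S : Type} (enc : S -> nat) (p : R -> S -> S -> R) : Prop :=
  (forall t i j, 0 <= t -> 0 <= p t i j) /\
  (forall t i, 0 <= t -> has_sumS enc (fun j => p t i j) 1) /\
  (forall i j, p 0 i j = delta i j) /\
  (forall s t i j, 0 <= s -> 0 <= t ->
      has_sumS enc (fun k => p s i k * p t k j) (p (s + t) i j)) /\
  (* Q-matrix: q i j = right derivative at 0 of p . i j; finite values
     (stable), and conservative: sum_{j <> i} q i j = - q i i *)
  exists q : S -> S -> R,
    (forall i j, limit1_in (fun t => (p t i j - delta i j) / t)
                           (fun t => 0 < t) (q i j) 0) /\
    (forall i, has_sumS enc (fun j => if excluded_middle_informative (i = j)
                                      then 0 else q i j) (- q i i)).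

(* A rooted tree: a node with a list of (edge length, child subtree).
   Leaves are the nodes with no children; they are ordered left to right. *)
Inductive tree : Type := Node : list (R * tree) -> tree.

Fixpoint nleaves (t : tree) : nat :=
  match t with
  | Node [] => 1%nat
  | Node cs =>
      (fix g (cs : list (R * tree)) : nat :=
         match cs with
         | [] => 0%nat
         | (_, c) :: cs' => (nleaves c + g cs')%nat
         end) cs
  end.

Fixpoint edges_pos (t : tree) : Prop :=
  match t with
  | Node cs =>
      (fix g (cs : list (R * tree)) : Prop :=
         match cs with
         | [] => True
         | (l, c) :: cs' => 0 < l /\ edges_pos c /\ g cs'
         end) cs
  end.

Fixpoint height (t : tree) : R :=
  match t with
  | Node cs =>
      (fix g (cs : list (R * tree)) : R :=
         match cs with
         | [] => 0
         | (l, c) :: cs' => Rmax (l + height c) (g cs')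
         end) cs
  end.

(* restriction of a tree to the leaves selected by a mask (left-to-right
   order): the subtree spanned by the root and the selected leaves *)
Fixpoint restrict (t : tree) (m : list bool) : option tree :=
  match t with
  | Node [] => match m with true :: _ => Some (Node []) | _ => None end
  | Node cs =>
      let cs' :=
        (fix g (cs : list (R * tree)) (m : list bool) : list (R * tree) :=
           match cs with
           | [] => []
           | (l, c) :: cs'' =>
               match restrict c (firstn (nleaves c) m) with
               | Some c' => (l, c') :: g cs'' (skipn (nleaves c) m)
               | None => g cs'' (skipn (nleaves c) m)
               end
           end) cs m in
      match cs' with [] => None | _ => Some (Node cs') end
  end.

(* metric normal form: suppress non-root vertices of degree 2 (one child),
   merging the two incident edges and adding their lengths *)
Fixpoint norm_edge (l : R) (t : tree) : R * tree :=
  match t with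
  | Node [(l', t')] => norm_edge (l + l') t'
  | Node cs =>
      (l, Node ((fix g (cs : list (R * tree)) : list (R * tree) :=
                   match cs with
                   | [] => []
                   | (l', c) :: cs' => norm_edge l' c :: g cs'
                   end) cs))
  end.

Definition norm_tree (t : tree) : tree :=
  match t with Node cs => Node (map (fun e => norm_edge (fst e) (snd e)) cs) end.

(* {T k} nested with common root: T (k-1) is (as a metric rooted tree with
   labelled leaves) the restriction of T k to k-1 of its leaves *)
Definition nested (T : nat -> tree) : Prop :=
  forall k, (2 <= k)%nat ->
    exists m : list bool, length m = k /\ count_occ Bool.bool_dec m true = (k - 1)%nat /\
      exists t', restrict (T k) m = Some t' /\ norm_tree (T (k - 1)%nat) = norm_tree t'.

(* lawT enc p t i sigma = P^i[ leaf states (left to right) = sigma ] *)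
Fixpoint lawT {S : Type} (enc : S -> nat) (p : R -> S -> S -> R)
    (t : tree) (i : S) (sigma : list S) : R :=
  match t with
  | Node [] => match sigma with [x] => delta x i | _ => 0 end
  | Node cs =>
      (fix g (cs : list (R * tree)) (sigma : list S) : R :=
         match cs with
         | [] => match sigma with [] => 1 | _ => 0 end
         | (l, c) :: cs' =>
             sumS enc (fun j => p l i j * lawT enc p c j (firstn (nleaves c) sigma))
             * g cs' (skipn (nleaves c) sigma)
         end) cs sigma
  end.

Definition liminf_is (u : nat -> R) (l : R) : Prop :=
  (forall eps, 0 < eps -> exists N, forall n, (N <= n)%nat -> l - eps < u n) /\
  (forall eps, 0 < eps -> forall N, exists n, (N <= n)%nat /\ u n < l + eps).

(* P^pi[ F_k(X_{leaves}) = X_root ] for the chain on T k *)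
Definition prob_correct {S : Type} (enc : S -> nat) (p : R -> S -> S -> R)
    (T : nat -> tree) (pi : S -> R) (F : nat -> list S -> S) (k : nat) : R :=
  sumS enc (fun i => pi i *
    sumSn enc k (fun sigma => lawT enc p (T k) i sigma * delta (F k sigma) i)).

Definition consistent {S : Type} (enc : S -> nat) (p : R -> S -> S -> R)
    (T : nat -> tree) (pi : S -> R) (F : nat -> list S -> S) : Prop :=
  liminf_is (prob_correct enc p T pi F) 1.

(* Main.v *)
Require Import Defs.
From Stdlib Require Import Reals Lra Lia ZArith List Classical ClassicalEpsilon FunctionalExtensionality.
Import ListNotations.
Open Scope R_scope.

Definition fsum {X : Type} (f : X -> R) (L : list X) : R :=
  fold_right (fun x acc => f x + acc) 0 L.

Lemma fsum_nil {X} (f : X -> R) : fsum f [] = 0.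
Proof. reflexivity. Qed.
Lemma fsum_cons {X} (f : X -> R) a L : fsum f (a :: L) = f a + fsum f L.
Proof. reflexivity. Qed.
Lemma fsum_app {X} (f : X -> R) L1 L2 : fsum f (L1 ++ L2) = fsum f L1 + fsum f L2.
Proof. induction L1; simpl; [ring| rewrite IHL1; ring]. Qed.
Lemma fsum_plus {X} (f g : X -> R) L : fsum (fun x => f x + g x) L = fsum f L + fsum g L.
Proof. induction L; simpl; [ring| rewrite IHL; ring]. Qed.
Lemma fsum_scal {X} (f : X -> R) c L : fsum (fun x => c * f x) L = c * fsum f L.
Proof. induction L; simpl; [ring| rewrite IHL; ring]. Qed.
Lemma fsum_ext {X} (f g : X -> R) L : (forall x, In x L -> f x = g x) -> fsum f L = fsum g L.
Proof. induction L; simpl; intros H; [reflexivity|]. rewrite H, IHL; auto. Qed.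
Lemma fsum_le {X} (f g : X -> R) L : (forall x, In x L -> f x <= g x) -> fsum f L <= fsum g L.
Proof. induction L; simpl; intros H; [lra|]. pose proof (H a (or_introl eq_refl)). pose proof (IHL (fun x h => H x (or_intror h))). lra. Qed.
Lemma fsum_nonneg {X} (f : X -> R) L : (forall x, In x L -> 0 <= f x) -> 0 <= fsum f L.
Proof. intros H. replace 0 with (fsum (fun _ => 0) L). apply fsum_le; auto.
  induction L; simpl; auto. rewrite IHL; auto. ring. intros; apply H; simpl; auto. Qed.
Lemma fsum_map {X Y} (f : Y -> R) (phi : X -> Y) L : fsum f (map phi L) = fsum (fun x => f (phi x)) L.
Proof. induction L; simpl; auto. rewrite IHL; auto. Qed.
Lemma fsum_zero {X} (f : X -> R) L : (forall x, In x L -> f x = 0) -> fsum f L = 0.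
Proof. intros H; induction L; simpl; auto. rewrite H, IHL; [ring| |]; simpl; auto. intros; apply H; simpl; auto. Qed.

Lemma fsum_incl {X} (f : X -> R) (L L' : list X) :
  NoDup L -> NoDup L' -> incl L L' -> (forall x, In x L' -> 0 <= f x) -> fsum f L <= fsum f L'.
Proof.
  revert L'. induction L as [|a L IH]; intros L' ND ND' Hi Hnn.
  - simpl. apply fsum_nonneg; auto.
  - assert (Ha : In a L') by (apply Hi; simpl; auto).
    destruct (in_split _ _ Ha) as [l1 [l2 ->]].
    rewrite fsum_app. simpl.
    inversion ND; subst.
    assert (fsum f L <= fsum f (l1 ++ l2)).
    { apply IH; auto. eapply NoDup_remove_1; eauto.
      intros x Hx. assert (In x (l1 ++ a :: l2)) by (apply Hi; simpl; auto).
      apply in_app_or in H. apply in_or_app. destruct H as [H|[H|H]]; auto.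
      subst; contradiction.
      intros x Hx. apply Hnn. apply in_app_or in Hx. apply in_or_app. simpl. tauto. }
    rewrite fsum_app in H. lra.
Qed.

Definition decX {X : Type} : forall x y : X, {x = y} + {x <> y} :=
  fun x y => excluded_middle_informative (x = y).

Definition inD {X} (D : X -> Prop) (L : list X) := forall x, In x L -> D x.

Definition SSd {X : Type} (D : X -> Prop) (f : X -> R) (l : R) : Prop :=
  (forall L, NoDup L -> inD D L -> fsum f L <= l) /\
  (forall eps, 0 < eps -> exists L, NoDup L /\ inD D L /\ l - eps < fsum f L).

Definition nonnegD {X} (D : X -> Prop) (f : X -> R) := forall x, D x -> 0 <= f x.

Lemma SS_unique {X} D (f : X -> R) a b : SSd D f a -> SSd D f b -> a = b.
Proof.
  intros [Ua La] [Ub Lb].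
  destruct (Rtotal_order a b) as [H|[H|H]]; auto.
  - destruct (Lb (b - a)) as [L [N [I H']]]; try lra. specialize (Ua L N I). lra.
  - destruct (La (a - b)) as [L [N [I H']]]; try lra. specialize (Ub L N I). lra.
Qed.

Lemma SS_nonneg {X} D (f : X -> R) a : SSd D f a -> 0 <= a.
Proof. intros [U _]. apply (U []); [constructor| intros x []]. Qed.

Lemma SS_point_le {X} D (f : X -> R) a x : SSd D f a -> D x -> f x <= a.
Proof. intros [U _] Hx. specialize (U [x]). simpl in U. assert (f x + 0 <= a); [|lra].
  apply U. repeat constructor. auto. intros y [<-|[]]; auto. Qed.

Lemma SS_exists {X} D (f : X -> R) B :
  (forall L, NoDup L -> inD D L -> fsum f L <= B) -> exists l, SSd D f l.
Proof.
  intros HB.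
  set (E := fun r => exists L, NoDup L /\ inD D L /\ r = fsum f L).
  assert (Hb : bound E). { exists B. intros r [L [N [I ->]]]. auto. }
  assert (He : exists x, E x). { exists 0, []. repeat split; [constructor| intros x []]. }
  destruct (completeness E Hb He) as [m [Hub Hlub]].
  exists m. split.
  - intros L N I. apply Hub. exists L; auto.
  - intros eps Heps. apply NNPP; intro Hn.
    assert (is_upper_bound E (m - eps)).
    { intros r [L [N [I ->]]]. apply Rnot_lt_le. intro Hc. apply Hn. exists L; auto. }
    specialize (Hlub _ H). lra.
Qed.

Lemma SS_le {X} D (f g : X -> R) a b :
  (forall x, D x -> f x <= g x) -> SSd D f a -> SSd D g b -> a <= b.
Proof.
  intros Hfg [Ua La] [Ub Lb]. apply Rnot_lt_le; intro H.
  destruct (La (a - b)) as [L [N [I H']]]; try lra.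
  specialize (Ub L N I). assert (fsum f L <= fsum g L) by (apply fsum_le; auto). lra.
Qed.

Lemma SS_ext {X} D (f g : X -> R) a :
  (forall x, D x -> f x = g x) -> SSd D f a -> SSd D g a.
Proof.
  intros Hfg [U Lo]. split.
  - intros L N I. rewrite <- (fsum_ext f g L) by (intros; apply Hfg, I; auto); auto.
  - intros eps He. destruct (Lo eps He) as [L [N [I H]]]. exists L; repeat split; auto.
    rewrite <- (fsum_ext f g L) by (intros; apply Hfg, I; auto); auto.
Qed.

Lemma merge_lists {X} (L1 L2 : list X) : exists L, NoDup L /\ incl L1 L /\ incl L2 L /\
  (forall x, In x L -> In x L1 \/ In x L2).
Proof.
  exists (nodup decX (L1 ++ L2)). repeat split.
  - apply NoDup_nodup.
  - intros x Hx. apply nodup_In. apply in_or_app; auto.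
  - intros x Hx. apply nodup_In. apply in_or_app; auto.
  - intros x Hx. apply nodup_In in Hx. apply in_app_or; auto.
Qed.

Lemma SS_plus {X} D (f g : X -> R) a b : nonnegD D f -> nonnegD D g ->
  SSd D f a -> SSd D g b -> SSd D (fun x => f x + g x) (a + b).
Proof.
  intros Hf Hg [Ua La] [Ub Lb]. split.
  - intros L N I. rewrite fsum_plus. specialize (Ua L N I). specialize (Ub L N I). lra.
  - intros eps He.
    destruct (La (eps/2)) as [L1 [N1 [I1 H1]]]; try lra.
    destruct (Lb (eps/2)) as [L2 [N2 [I2 H2]]]; try lra.
    destruct (merge_lists L1 L2) as [L [N [i1 [i2 iL]]]].
    assert (IL : inD D L). { intros x Hx. destruct (iL x Hx); auto. }
    exists L. repeat split; auto. rewrite fsum_plus.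
    assert (fsum f L1 <= fsum f L) by (apply fsum_incl; auto).
    assert (fsum g L2 <= fsum g L) by (apply fsum_incl; auto). lra.
Qed.

Lemma SS_scal {X} D (f : X -> R) a c : 0 <= c -> nonnegD D f ->
  SSd D f a -> SSd D (fun x => c * f x) (c * a).
Proof.
  intros Hc Hf [Ua La]. split.
  - intros L N I. rewrite fsum_scal. apply Rmult_le_compat_l; auto.
  - intros eps He. destruct (Req_dec c 0) as [->|Hc0].
    + exists []. repeat split; [constructor| intros x []|]. simpl. lra.
    + destruct (La (eps / c)) as [L [N [I H]]]. apply Rdiv_lt_0_compat; lra.
      exists L; repeat split; auto. rewrite fsum_scal.
      assert (c * (a - eps / c) < c * fsum f L) by (apply Rmult_lt_compat_l; lra).
      replace (c * (a - eps / c)) with (c * a - eps) in H0 by (field; auto). lra.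
Qed.

Lemma SS_scal_r {X} D (f : X -> R) a c : 0 <= c -> nonnegD D f ->
  SSd D f a -> SSd D (fun x => f x * c) (a * c).
Proof. intros. rewrite Rmult_comm. apply SS_ext with (fun x => c * f x).
  intros; ring. apply SS_scal; auto. Qed.

Lemma SS_minus {X} D (f g : X -> R) a b : nonnegD D f -> nonnegD D g ->
  SSd D f a -> SSd D (fun x => f x + g x) b -> SSd D g (b - a).
Proof.
  intros Hf Hg Ha Hb.
  destruct (SS_exists D g b) as [c Hc].
  { intros L N I. destruct Hb as [U _]. specialize (U L N I). rewrite fsum_plus in U.
    assert (0 <= fsum f L) by (apply fsum_nonneg; auto). lra. }
  pose proof (SS_plus D f g a c Hf Hg Ha Hc).
  pose proof (SS_unique _ _ _ _ H Hb). replace (b - a) with c by lra. auto.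
Qed.

Lemma SS_zero {X} D (f : X -> R) : (forall x, D x -> f x = 0) -> SSd D f 0.
Proof.
  intros H. split.
  - intros L N I. rewrite fsum_zero; auto. lra.
  - intros eps He. exists []. repeat split; [constructor| intros x []|]. simpl; lra.
Qed.

Lemma SS_point {X} D (f : X -> R) a : D a -> (forall x, D x -> x <> a -> f x = 0) ->
  nonnegD D f -> SSd D f (f a).
Proof.
  intros Da H Hnn. split.
  - intros L N I.
    assert (forall L, NoDup L -> inD D L -> ~ In a L -> fsum f L = 0).
    { intros L0 N0 I0 Hn. apply fsum_zero. intros x Hx. apply H; auto. intro; subst; auto. }
    destruct (in_dec decX a L) as [Hin|Hout].
    + destruct (in_split _ _ Hin) as [l1 [l2 ->]]. rewrite fsum_app. simpl.
      apply NoDup_remove_2 in N as N2. apply NoDup_remove_1 in N as N1.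
      assert (Z1 : fsum f l1 = 0).
      { apply H0. eapply NoDup_app_remove_r; eauto.
        intros x Hx; apply I; apply in_or_app; simpl; auto.
        intro; apply N2; apply in_or_app; auto. }
      assert (Z2 : fsum f l2 = 0).
      { apply H0. eapply NoDup_app_remove_l; eauto.
        intros x Hx; apply I; apply in_or_app; simpl; auto.
        intro; apply N2; apply in_or_app; auto. }
      lra.
    + rewrite H0; auto; apply Hnn; auto.
  - intros eps He. exists [a]. repeat split. repeat constructor; auto. intros x [<-|[]]; auto.
    simpl; lra.
Qed.

Lemma SS_transport {X Y} (DX : X -> Prop) (DY : Y -> Prop) (phi : X -> Y) (f : Y -> R) l :
  (forall x, DX x -> DY (phi x)) ->
  (forall x y, DX x -> DX y -> phi x = phi y -> x = y) ->
  (forall y, DY y -> exists x, DX x /\ phi x = y) ->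
  SSd DX (fun x => f (phi x)) l <-> SSd DY f l.
Proof.
  intros Hm Hi Hs.
  assert (Hmap : forall L, NoDup L -> inD DX L -> NoDup (map phi L) /\ inD DY (map phi L)).
  { induction L as [|a L IH]; intros N I; simpl. split; [constructor| intros x []].
    inversion N; subst. destruct IH as [N' I']; auto. intros x Hx; apply I; simpl; auto.
    split. constructor; auto. intro Hin. apply in_map_iff in Hin. destruct Hin as [b [Hb Hb']].
    apply Hi in Hb; subst; auto. apply I; simpl; auto. apply I; simpl; auto.
    intros y [<-|Hy]; auto. apply Hm, I; simpl; auto. }
  assert (Hpre : forall L', NoDup L' -> inD DY L' -> exists L, NoDup L /\ inD DX L /\ map phi L = L').
  { induction L' as [|a L' IH]; intros N I. exists []; repeat split; [constructor| intros x []].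
    inversion N; subst. destruct IH as [L [NL [IL EL]]]; auto. intros x Hx; apply I; simpl; auto.
    destruct (Hs a) as [x [Dx Ex]]. apply I; simpl; auto.
    exists (x :: L). repeat split. constructor; auto. intro Hin. apply H1. rewrite <- EL, <- Ex.
    apply in_map; auto. intros z [<-|Hz]; auto. simpl. congruence. }
  split; intros [U Lo]; split.
  - intros L' N I. destruct (Hpre L' N I) as [L [NL [IL EL]]]. subst. rewrite fsum_map. auto.
  - intros eps He. destruct (Lo eps He) as [L [N [I H]]]. destruct (Hmap L N I).
    exists (map phi L). repeat split; auto. rewrite fsum_map; auto.
  - intros L N I. destruct (Hmap L N I). rewrite <- fsum_map. auto.
  - intros eps He. destruct (Lo eps He) as [L' [N [I H]]]. destruct (Hpre L' N I) as [L [NL [IL EL]]].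
    exists L. repeat split; auto. subst. rewrite <- fsum_map. auto.
Qed.
Definition PD {X Y} (DX : X -> Prop) (DY : Y -> Prop) (z : X * Y) := DX (fst z) /\ DY (snd z).

Lemma NoDup_map_pair {X Y} (x : X) (L : list Y) : NoDup L -> NoDup (map (fun y => (x, y)) L).
Proof. induction 1; simpl; constructor; auto. intro H'. apply in_map_iff in H'.
  destruct H' as [y [E Hy]]. inversion E; subst; auto. Qed.

Lemma NoDup_prod {X Y} (L1 : list X) (L2 : list Y) : NoDup L1 -> NoDup L2 -> NoDup (list_prod L1 L2).
Proof.
  intros N1 N2. induction N1; simpl. constructor.
  apply NoDup_app; auto. apply NoDup_map_pair; auto.
  intros z Hz1 Hz2. apply in_map_iff in Hz1. destruct Hz1 as [y [<- _]].
  apply in_prod_iff in Hz2. tauto.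
Qed.

Lemma fsum_prod {X Y} (h : X -> Y -> R) L1 L2 :
  fsum (fun z => h (fst z) (snd z)) (list_prod L1 L2) = fsum (fun x => fsum (h x) L2) L1.
Proof. induction L1; simpl; auto. rewrite fsum_app, IHL1, fsum_map. simpl. reflexivity. Qed.

Lemma approx_rows {X Y} (DX : X -> Prop) (DY : Y -> Prop) (h : X -> Y -> R) (g : X -> R) Lx :
  NoDup Lx -> inD DX Lx -> (forall x, In x Lx -> SSd DY (h x) (g x)) ->
  forall eps, 0 < eps -> exists P, NoDup P /\ inD (PD DX DY) P /\ (forall z, In z P -> In (fst z) Lx) /\
    fsum g Lx - eps < fsum (fun z => h (fst z) (snd z)) P.
Proof.
  induction Lx as [|x Lx IH]; intros N I Hr eps He.
  - exists []. split; [constructor|]. split; [intros z []|]. split; [intros z []|]. simpl; lra.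
  - inversion N; subst.
    destruct (IH H2 (fun y Hy => I y (or_intror Hy)) (fun y Hy => Hr y (or_intror Hy)) (eps/2)) as [P0 [N0 [I0 [F0 S0]]]]; [lra|].
    destruct (Hr x (or_introl eq_refl)) as [_ Lo].
    destruct (Lo (eps/2)) as [Ly [Ny [Iy Sy]]]; [lra|].
    exists (map (fun y => (x, y)) Ly ++ P0). split; [|split; [|split]].
    + apply NoDup_app; auto. apply NoDup_map_pair; auto.
      intros z Hz1 Hz2. apply in_map_iff in Hz1. destruct Hz1 as [y [<- _]].
      apply F0 in Hz2. simpl in Hz2. auto.
    + intros z Hz. apply in_app_or in Hz. destruct Hz as [Hz|Hz]; auto.
      apply in_map_iff in Hz. destruct Hz as [y [<- Hy]]. split; simpl; auto. apply I; simpl; auto.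
    + intros z Hz. apply in_app_or in Hz. destruct Hz as [Hz|Hz].
      apply in_map_iff in Hz. destruct Hz as [y [<- Hy]]. simpl; auto.
      right; auto.
    + rewrite fsum_app, fsum_map. simpl.
      change (fsum (fun x0 : Y => h x x0) Ly) with (fsum (h x) Ly). lra.
Qed.

Lemma SS_fubini_conv {X Y} (DX : X -> Prop) (DY : Y -> Prop) (h : X -> Y -> R) (g : X -> R) l :
  (forall x y, DX x -> DY y -> 0 <= h x y) ->
  (forall x, DX x -> SSd DY (h x) (g x)) -> SSd DX g l ->
  SSd (PD DX DY) (fun z => h (fst z) (snd z)) l.
Proof.
  intros Hnn Hr [U Lo]. split.
  - intros P N I.
    set (Lx := nodup decX (map fst P)). set (Ly := nodup decX (map snd P)).
    assert (ILx : inD DX Lx). { intros x Hx. apply nodup_In, in_map_iff in Hx. destruct Hx as [z [<- Hz]]. apply I; auto. }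
    assert (ILy : inD DY Ly). { intros x Hx. apply nodup_In, in_map_iff in Hx. destruct Hx as [z [<- Hz]]. apply I; auto. }
    apply Rle_trans with (fsum (fun z => h (fst z) (snd z)) (list_prod Lx Ly)).
    { apply fsum_incl; auto. apply NoDup_prod; apply NoDup_nodup.
      intros [x y] Hz. apply in_prod_iff. split; apply nodup_In; [apply (in_map fst P (x,y)) | apply (in_map snd P (x,y))]; auto.
      intros [x y] Hz. apply in_prod_iff in Hz. apply Hnn; [apply ILx|apply ILy]; tauto. }
    rewrite fsum_prod. apply Rle_trans with (fsum g Lx).
    + apply fsum_le. intros x Hx. destruct (Hr x (ILx x Hx)) as [Ux _]. apply Ux; auto. apply NoDup_nodup.
    + apply U; auto. apply NoDup_nodup.
  - intros eps He. destruct (Lo (eps/2)) as [Lx [N [I S1]]]; [lra|].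
    destruct (approx_rows DX DY h g Lx N I (fun x Hx => Hr x (I x Hx)) (eps/2)) as [P [NP [IP [_ SP]]]]; [lra|].
    exists P. split; [|split]; auto. lra.
Qed.

Lemma SS_fubini {X Y} (DX : X -> Prop) (DY : Y -> Prop) (h : X -> Y -> R) l :
  (forall x y, DX x -> DY y -> 0 <= h x y) ->
  SSd (PD DX DY) (fun z => h (fst z) (snd z)) l ->
  exists g : X -> R, (forall x, DX x -> SSd DY (h x) (g x)) /\ SSd DX g l.
Proof.
  intros Hnn Hl.
  assert (Hrow : forall x, exists r, DX x -> SSd DY (h x) r).
  { intros x. destruct (classic (DX x)) as [Dx|nDx]; [|exists 0; tauto].
    destruct (SS_exists DY (h x) l) as [r Hr]; [|exists r; auto].
    intros L N I. destruct Hl as [U _].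
    replace (fsum (h x) L) with (fsum (fun z => h (fst z) (snd z)) (map (fun y => (x, y)) L))
      by (rewrite fsum_map; reflexivity).
    apply U. apply NoDup_map_pair; auto. intros z Hz. apply in_map_iff in Hz.
    destruct Hz as [y [<- Hy]]. split; simpl; auto. }
  destruct (choice _ Hrow) as [g Hg]. exists g. split; auto.
  destruct (SS_exists DX g l) as [l' Hl'].
  { intros Lx N I. apply Rnot_lt_le; intro Hc.
    destruct (approx_rows DX DY h g Lx N I (fun x Hx => Hg x (I x Hx)) (fsum g Lx - l)) as [P [NP [IP [_ SP]]]]; [lra|].
    destruct Hl as [U _]. specialize (U P NP IP). lra. }
  pose proof (SS_fubini_conv DX DY h g l' Hnn Hg Hl').
  rewrite (SS_unique _ _ _ _ Hl H). auto.
Qed.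

Lemma SS_swap {X Y} (DX : X -> Prop) (DY : Y -> Prop) (h : X -> Y -> R) l :
  SSd (PD DX DY) (fun z => h (fst z) (snd z)) l ->
  SSd (PD DY DX) (fun z => h (snd z) (fst z)) l.
Proof.
  intros H. apply (SS_transport (PD DY DX) (PD DX DY) (fun z => (snd z, fst z)) (fun z => h (fst z) (snd z))).
  - intros [a b] [Ha Hb]; split; auto.
  - intros [a b] [c d] _ _ E. inversion E; auto.
  - intros [a b] [Ha Hb]. exists (b, a). split; [split|]; auto.
  - simpl. auto.
Qed.
Definition TT {X : Type} (x : X) := True.
Definition Len {S : Type} (n : nat) (s : list S) := length s = n.

Definition optS {S : Type} (enc : S -> nat) (n : nat) : option S :=
  match excluded_middle_informative (exists s, enc s = n) with
  | left H => Some (proj1_sig (constructive_indefinite_description _ H))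
  | right _ => None
  end.

Lemma termS_opt {S} (enc : S -> nat) f n :
  termS enc f n = match optS enc n with Some s => f s | None => 0 end.
Proof. unfold termS, optS. destruct (excluded_middle_informative _); reflexivity. Qed.

Lemma optS_spec {S} (enc : S -> nat) n s : optS enc n = Some s -> enc s = n.
Proof. unfold optS. destruct (excluded_middle_informative _) as [H|H]; intro E; inversion E.
  destruct (constructive_indefinite_description _ H); simpl; auto. Qed.

Lemma optS_enc {S} (enc : S -> nat) (enc_inj : forall x y, enc x = enc y -> x = y) s :
  optS enc (enc s) = Some s.
Proof. unfold optS. destruct (excluded_middle_informative _) as [H|H].
  destruct (constructive_indefinite_description _ H) as [x Hx]; simpl. f_equal; auto.
  exfalso; apply H; eauto. Qed.

Definition olist {S} (o : option S) : list S := match o with Some s => [s] | None => [] end.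

Fixpoint enumN {S} (enc : S -> nat) (N : nat) : list S :=
  match N with
  | O => olist (optS enc 0)
  | Datatypes.S N' => enumN enc N' ++ olist (optS enc (Datatypes.S N'))
  end.

Lemma sum_enumN {S} (enc : S -> nat) f N : sum_f_R0 (termS enc f) N = fsum f (enumN enc N).
Proof.
  induction N; simpl.
  - rewrite termS_opt. destruct (optS enc 0); simpl; ring.
  - rewrite fsum_app, IHN, termS_opt. destruct (optS enc (Datatypes.S N)); simpl; ring.
Qed.

Lemma in_enumN {S} (enc : S -> nat) (enc_inj : forall x y, enc x = enc y -> x = y) N s :
  In s (enumN enc N) <-> (enc s <= N)%nat.
Proof.
  induction N; simpl.
  - split.
    + intro H. destruct (optS enc 0) eqn:E; simpl in H; [|contradiction].
      destruct H as [<-|[]]. apply optS_spec in E. lia.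
    + intro H. assert (enc s = 0)%nat by lia. rewrite <- H0, optS_enc; simpl; auto.
  - rewrite in_app_iff, IHN. split.
    + intros [H|H]. lia. destruct (optS enc (Datatypes.S N)) eqn:E; simpl in H; [|contradiction].
      destruct H as [<-|[]]. apply optS_spec in E. lia.
    + intro H. destruct (Nat.eq_dec (enc s) (Datatypes.S N)) as [E|E].
      right. rewrite <- E, optS_enc; simpl; auto. left; lia.
Qed.

Lemma NoDup_enumN {S} (enc : S -> nat) (enc_inj : forall x y, enc x = enc y -> x = y) N :
  NoDup (enumN enc N).
Proof.
  induction N; simpl.
  - destruct (optS enc 0); simpl; repeat constructor; auto.
  - apply NoDup_app; auto. destruct (optS enc (Datatypes.S N)); simpl; repeat constructor; auto.
    intros x H1 H2. destruct (optS enc (Datatypes.S N)) eqn:E; simpl in H2; [|contradiction].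
    destruct H2 as [<-|[]]. apply optS_spec in E. apply (in_enumN enc enc_inj) in H1. lia.
Qed.

Lemma list_bound {S} (enc : S -> nat) (L : list S) : exists N, forall s, In s L -> (enc s <= N)%nat.
Proof. induction L as [|a L [N HN]]. exists O; intros s []. exists (Nat.max N (enc a)).
  intros s [<-|H]. lia. specialize (HN s H). lia. Qed.

Lemma SS_has {S} (enc : S -> nat) (enc_inj : forall x y, enc x = enc y -> x = y) f l :
  nonnegD TT f -> SSd TT f l -> has_sumS enc f l.
Proof.
  intros Hnn [U Lo] eps He. destruct (Lo eps He) as [L [N [I0 H]]].
  destruct (list_bound enc L) as [M HM]. exists M. intros n Hn.
  rewrite sum_enumN. unfold R_dist.
  assert (fsum f (enumN enc n) <= l). { apply U. apply NoDup_enumN; auto. intros x _; exact Logic.I. }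
  assert (fsum f L <= fsum f (enumN enc n)).
  { apply fsum_incl; auto. apply NoDup_enumN; auto. intros x Hx. apply (in_enumN enc enc_inj).
    specialize (HM x Hx). lia. intros; apply Hnn; exact Logic.I. }
  rewrite Rabs_left1; lra.
Qed.

Lemma has_SS {S} (enc : S -> nat) (enc_inj : forall x y, enc x = enc y -> x = y) f l :
  nonnegD TT f -> has_sumS enc f l -> SSd TT f l.
Proof.
  intros Hnn H.
  assert (Hmono : forall n m, (n <= m)%nat -> fsum f (enumN enc n) <= fsum f (enumN enc m)).
  { intros n m Hnm. apply fsum_incl; try apply NoDup_enumN; auto.
    intros x Hx. apply (in_enumN enc enc_inj) in Hx. apply (in_enumN enc enc_inj). lia.
    intros; apply Hnn; exact Logic.I. }
  assert (Hle : forall n, fsum f (enumN enc n) <= l).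
  { intros n. apply Rnot_lt_le; intro Hc. destruct (H (fsum f (enumN enc n) - l)) as [N HN]. lra.
    specialize (HN (Nat.max n N) ltac:(lia)). rewrite sum_enumN in HN. unfold R_dist in HN.
    specialize (Hmono n (Nat.max n N) ltac:(lia)). rewrite Rabs_right in HN; lra. }
  split.
  - intros L N I. destruct (list_bound enc L) as [M HM].
    apply Rle_trans with (fsum f (enumN enc M)); auto.
    apply fsum_incl; auto. apply NoDup_enumN; auto. intros x Hx. apply (in_enumN enc enc_inj); auto.
    intros; apply Hnn; exact Logic.I.
  - intros eps He. destruct (H eps He) as [N HN]. specialize (HN N (le_n _)).
    rewrite sum_enumN in HN. unfold R_dist in HN.
    exists (enumN enc N). split; [apply NoDup_enumN; auto|]. split; [intros x _; exact Logic.I|].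
    rewrite Rabs_left1 in HN. lra. specialize (Hle N); lra.
Qed.

Lemma sumS_SS {S} (enc : S -> nat) (enc_inj : forall x y, enc x = enc y -> x = y) f l :
  nonnegD TT f -> SSd TT f l -> sumS enc f = l.
Proof.
  intros Hnn H. pose proof (SS_has enc enc_inj f l Hnn H) as Hh.
  unfold sumS. assert (Hex : exists l, has_sumS enc f l) by eauto.
  pose proof (epsilon_spec (inhabits 0) _ Hex). eapply uniqueness_sum; eauto.
Qed.

Lemma sumSn_SS {S} (enc : S -> nat) (enc_inj : forall x y, enc x = enc y -> x = y) n :
  forall F l, nonnegD (Len n) F -> SSd (Len n) F l -> sumSn enc n F = l.
Proof.
  induction n as [|n IH]; intros F l Hnn H.
  - simpl. assert (H0 : SSd (Len 0) F (F [])).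
    { apply SS_point. reflexivity. intros x Hx Hn. destruct x; [contradiction|discriminate]. auto. }
    apply (SS_unique _ _ _ _ H0 H).
  - simpl.
    assert (Hp : SSd (PD (@TT S) (Len n)) (fun z => F (fst z :: snd z)) l).
    { apply (SS_transport (PD TT (Len n)) (Len (Datatypes.S n)) (fun z => fst z :: snd z) F); auto.
      - intros [a r] [_ Hr]. unfold Len in *; simpl in *; lia.
      - intros [a r] [b q] _ _ E. inversion E; auto.
      - intros [|a r] Hr; unfold Len in Hr; simpl in Hr. discriminate. exists (a, r). split; [split; [exact Logic.I| unfold Len; simpl; lia]| reflexivity]. }
    destruct (SS_fubini TT (Len n) (fun s r => F (s :: r)) l) as [g [Hg Hgl]]; auto.
    { intros x y _ Hy. apply Hnn. unfold Len in *; simpl; lia. }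
    assert (E : (fun s => sumSn enc n (fun r => F (s :: r))) = g).
    { apply functional_extensionality. intros s. apply IH; auto.
      intros r Hr. apply Hnn. unfold Len in *; simpl; lia. apply Hg. exact Logic.I. }
    rewrite E. apply sumS_SS; auto. intros s _. eapply SS_nonneg. apply Hg. exact Logic.I.
Qed.
Fixpoint tree_ind2 (P : tree -> Prop) (H : forall cs, Forall (fun e => P (snd e)) cs -> P (Node cs))
  (t : tree) : P t :=
  match t with
  | Node cs => H cs ((fix g (cs : list (R * tree)) : Forall (fun e => P (snd e)) cs :=
      match cs with
      | [] => Forall_nil _
      | (l, c) :: cs' => @Forall_cons _ (fun e => P (snd e)) (l, c) cs' (tree_ind2 P H c) (g cs')
      end) cs)
  end.

Definition lawG {S : Type} (enc : S -> nat) (p : R -> S -> S -> R) (i : S)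
  (cs : list (R * tree)) (sigma : list S) : R :=
  (fix g (cs : list (R * tree)) (sigma : list S) : R :=
     match cs with
     | [] => match sigma with [] => 1 | _ => 0 end
     | (l, c) :: cs' =>
         sumS enc (fun j => p l i j * lawT enc p c j (firstn (nleaves c) sigma))
         * g cs' (skipn (nleaves c) sigma)
     end) cs sigma.

Definition nG (cs : list (R * tree)) : nat :=
  (fix g (cs : list (R * tree)) : nat :=
     match cs with
     | [] => 0%nat
     | (_, c) :: cs' => (nleaves c + g cs')%nat
     end) cs.

Definition epG (cs : list (R * tree)) : Prop :=
  (fix g (cs : list (R * tree)) : Prop :=
     match cs with
     | [] => True
     | (l, c) :: cs' => 0 < l /\ edges_pos c /\ g cs'
     end) cs.

Lemma lawT_node {S} enc p e cs (i : S) sigma : lawT enc p (Node (e :: cs)) i sigma = lawG enc p i (e :: cs) sigma.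
Proof. reflexivity. Qed.
Lemma nleaves_node e cs : nleaves (Node (e :: cs)) = nG (e :: cs).
Proof. reflexivity. Qed.
Lemma edges_node cs : edges_pos (Node cs) = epG cs.
Proof. reflexivity. Qed.

Lemma firstn_app_len {S} (a b : list S) : firstn (length a) (a ++ b) = a.
Proof. induction a; simpl; [destruct b; auto| f_equal; auto]. Qed.
Lemma skipn_app_len {S} (a b : list S) : skipn (length a) (a ++ b) = b.
Proof. induction a; simpl; auto. Qed.

Lemma SS_prod {S : Type} (a b : nat) (f g : list S -> R) x y :
  nonnegD (Len a) f -> nonnegD (Len b) g -> SSd (Len a) f x -> SSd (Len b) g y ->
  nonnegD (Len (a + b)) (fun s => f (firstn a s) * g (skipn a s)) /\
  SSd (Len (a + b)) (fun s => f (firstn a s) * g (skipn a s)) (x * y).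
Proof.
  intros Hf Hg Hx Hy.
  assert (Lf : forall s : list S, Len (a + b) s -> Len a (firstn a s)).
  { intros s Hs. unfold Len in *. rewrite length_firstn. lia. }
  assert (Lg : forall s : list S, Len (a + b) s -> Len b (skipn a s)).
  { intros s Hs. unfold Len in *. rewrite length_skipn. lia. }
  split.
  { intros s Hs. apply Rmult_le_pos; auto. }
  apply (SS_transport (PD (Len a) (Len b)) (Len (a + b)) (fun z => fst z ++ snd z)).
  - intros [u v] [Hu Hv]; unfold Len in *; simpl in *; rewrite length_app; lia.
  - intros [u v] [u' v'] [Hu Hv] [Hu' Hv'] E; simpl in *. unfold Len in *.
    assert (E1 : firstn (length u) (u ++ v) = firstn (length u') (u' ++ v')) by (rewrite Hu, Hu', E; reflexivity).
    rewrite !firstn_app_len in E1. subst u'.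
    assert (E2 : skipn (length u) (u ++ v) = skipn (length u) (u ++ v')) by (rewrite E; reflexivity).
    rewrite !skipn_app_len in E2. subst; reflexivity.
  - intros s Hs. exists (firstn a s, skipn a s). split; [split|]; simpl; auto. apply firstn_skipn.
  - apply SS_ext with (fun z => f (fst z) * g (snd z)).
    { intros [u v] [Hu Hv]; simpl in *. unfold Len in Hu. subst a.
      rewrite firstn_app_len, skipn_app_len. reflexivity. }
    apply (SS_fubini_conv (Len a) (Len b) (fun u v => f u * g v) (fun u => f u * y)).
    + intros; apply Rmult_le_pos; auto.
    + intros u Hu. apply SS_scal; auto.
    + apply SS_scal_r; auto. eapply SS_nonneg; eauto.
Qed.

Section Law.
Context {S : Type} (enc : S -> nat) (enc_inj : forall x y, enc x = enc y -> x = y)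
  (p : R -> S -> S -> R)
  (Hp0 : forall t i j, 0 <= t -> 0 <= p t i j)
  (Hp1 : forall t i, 0 <= t -> has_sumS enc (fun j => p t i j) 1).

Definition lawOK (t : tree) : Prop :=
  edges_pos t -> forall i, nonnegD (Len (nleaves t)) (lawT enc p t i) /\
                      SSd (Len (nleaves t)) (lawT enc p t i) 1.

Lemma edge_step l c i : 0 < l -> lawOK c -> edges_pos c ->
  nonnegD (Len (nleaves c)) (fun tau => sumS enc (fun j => p l i j * lawT enc p c j tau)) /\
  SSd (Len (nleaves c)) (fun tau => sumS enc (fun j => p l i j * lawT enc p c j tau)) 1.
Proof.
  intros Hl Hc Ec. set (n := nleaves c). set (L := lawT enc p c).
  assert (HL : forall j, nonnegD (Len n) (L j) /\ SSd (Len n) (L j) 1) by (intro j; apply Hc; auto).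
  assert (HL1 : forall j tau, Len n tau -> L j tau <= 1).
  { intros j tau Ht. eapply SS_point_le; eauto. apply HL. }
  assert (Hpn : nonnegD TT (p l i)) by (intros j _; apply Hp0; lra).
  assert (Hps : SSd TT (p l i) 1) by (apply (has_SS enc); auto; apply Hp1; lra).
  assert (Ha : forall tau, Len n tau -> exists a, SSd TT (fun j => p l i j * L j tau) a).
  { intros tau Ht. apply SS_exists with 1. intros Lj N I.
    apply Rle_trans with (fsum (p l i) Lj). apply fsum_le. intros j _.
    pose proof (HL1 j tau Ht). pose proof (proj1 (HL j) tau Ht). pose proof (Hpn j Logic.I).
    rewrite <- (Rmult_1_r (p l i j)) at 2. apply Rmult_le_compat_l; auto.
    apply Hps; auto. }
  assert (Hpair : SSd (PD TT (Len n)) (fun z => (fun j tau => p l i j * L j tau) (fst z) (snd z)) 1).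
  { apply (SS_fubini_conv TT (Len n) (fun j tau => p l i j * L j tau) (fun j => p l i j * 1) 1).
    - intros j tau _ Ht. apply Rmult_le_pos. apply Hpn; exact Logic.I. apply HL; auto.
    - intros j _. apply SS_scal. apply Hpn; exact Logic.I. apply HL. apply HL.
    - apply SS_ext with (p l i). intros; ring. auto. }
  apply SS_swap in Hpair.
  destruct (SS_fubini (Len n) TT (fun tau j => p l i j * L j tau) 1) as [g [Hg Hg1]]; auto.
  { intros tau j Ht _. apply Rmult_le_pos. apply Hpn; exact Logic.I. apply HL; auto. }
  assert (Eq : forall tau, Len n tau -> sumS enc (fun j => p l i j * L j tau) = g tau).
  { intros tau Ht. apply (sumS_SS enc). exact enc_inj.
    - intros j _. apply Rmult_le_pos. apply Hpn; exact Logic.I. apply HL; auto.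
    - apply Hg; auto. }
  split.
  - intros tau Ht. rewrite Eq; auto. eapply SS_nonneg. apply Hg; auto.
  - apply SS_ext with g; auto. intros; symmetry; auto.
Qed.

Lemma lawG_ok cs : Forall (fun e => lawOK (snd e)) cs -> epG cs -> forall i,
  nonnegD (Len (nG cs)) (lawG enc p i cs) /\ SSd (Len (nG cs)) (lawG enc p i cs) 1.
Proof.
  induction cs as [|[l c] cs IH]; intros HF He i.
  - unfold lawG. simpl. split.
    + intros s _. destruct s; lra.
    + change 1 with ((fun s : list S => match s with [] => 1 | _ :: _ => 0 end) []).
      apply SS_point. reflexivity. intros [|x s] Hs Hn; [contradiction|]; reflexivity.
      intros s _; destruct s; lra.
  - inversion HF; subst. destruct He as [Hl [Hc Hcs]].
    destruct (edge_step l c i Hl H1 Hc) as [N1 S1].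
    destruct (IH H2 Hcs i) as [N2 S2].
    pose proof (SS_prod _ _ _ _ _ _ N1 N2 S1 S2) as [N3 S3].
    rewrite Rmult_1_r in S3. split; [exact N3| exact S3].
Qed.

Lemma lawT_ok t : lawOK t.
Proof.
  induction t using tree_ind2. intros He i. destruct cs as [|e cs].
  - simpl. split.
    + intros s _. destruct s as [|x [|y s]]; try lra. unfold delta. destruct (excluded_middle_informative _); lra.
    + set (f0 := fun s : list S => match s with [x] => delta x i | _ => 0 end).
      assert (H1 : SSd (Len 1) f0 (f0 [i])).
      { apply SS_point. reflexivity.
        * intros [|x [|y s]] Hs Hn; try reflexivity. unfold f0, delta. destruct (excluded_middle_informative _); subst; congruence.
        * intros [|x [|y s]] _; unfold f0; try lra. unfold delta. destruct (excluded_middle_informative _); lra. }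
      assert (E : f0 [i] = 1). { unfold f0, delta. destruct (excluded_middle_informative (i = i)); congruence. }
      rewrite E in H1. apply SS_ext with f0; [intros [|x [|y s]] _; reflexivity | exact H1].
  - rewrite edges_node in He. rewrite nleaves_node.
    destruct (lawG_ok (e :: cs) H He i) as [N1 S1]. split.
    + intros s Hs. rewrite lawT_node. auto.
    + apply SS_ext with (lawG enc p i (e :: cs)); auto.
Qed.

End Law.
Lemma mul_le_self a d : 0 <= a -> 0 <= d <= 1 -> a * d <= a.
Proof. intros. nra. Qed.

Lemma delta_01 {S} (x y : S) : 0 <= delta x y <= 1.
Proof. unfold delta; destruct (excluded_middle_informative _); lra. Qed.
Lemma delta_eq {S} (x : S) : delta x x = 1.
Proof. unfold delta; destruct (excluded_middle_informative _); congruence. Qed.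
Lemma delta_neq {S} (x y : S) : x <> y -> delta x y = 0.
Proof. unfold delta; destruct (excluded_middle_informative _); congruence. Qed.

Lemma fsum_ge_term {X} (f : X -> R) L x : In x L -> (forall y, In y L -> 0 <= f y) -> f x <= fsum f L.
Proof.
  induction L as [|a L IH]; intros Hx Hnn; [destruct Hx|]. simpl. destruct Hx as [<-|Hx].
  - pose proof (fsum_nonneg f L (fun y Hy => Hnn y (or_intror Hy))). lra.
  - pose proof (Hnn a (or_introl eq_refl)). specialize (IH Hx (fun y Hy => Hnn y (or_intror Hy))). lra.
Qed.

Lemma SS_fsum {X Y} (D : X -> Prop) (G : Y -> X -> R) (s : Y -> R) (A : list Y) :
  (forall j, In j A -> nonnegD D (G j)) -> (forall j, In j A -> SSd D (G j) (s j)) ->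
  SSd D (fun x => fsum (fun j => G j x) A) (fsum s A).
Proof.
  induction A as [|a A IH]; intros Hn Hs; simpl.
  - apply SS_zero; auto.
  - apply SS_plus.
    + apply Hn; simpl; auto.
    + intros x Hx. apply fsum_nonneg. intros j Hj. apply Hn; simpl; auto.
    + apply Hs; simpl; auto.
    + apply IH; intros; [apply Hn|apply Hs]; simpl; auto.
Qed.

Fixpoint amax {S} (g : S -> R) (d : S) (A : list S) : S :=
  match A with
  | [] => d
  | a :: A' => let b := amax g d A' in if Rle_dec (g a) (g b) then b else a
  end.

Lemma amax_spec {S} (g : S -> R) d A : In (amax g d A) (d :: A) /\ forall x, In x A -> g x <= g (amax g d A).
Proof.
  induction A as [|a A [IH1 IH2]]; simpl. split; auto. intros x [].
  destruct (Rle_dec (g a) (g (amax g d A))).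
  - split. destruct IH1; auto. intros x [<-|Hx]; auto.
  - split; auto. intros x [<-|Hx]. lra. specialize (IH2 x Hx). lra.
Qed.

Section Prob.
Context {S : Type} (enc : S -> nat) (enc_inj : forall x y, enc x = enc y -> x = y)
  (n : nat) (mu : S -> list S -> R)
  (Hmu : forall i, nonnegD (Len n) (mu i) /\ SSd (Len n) (mu i) 1).

Lemma mu_nn i s : Len n s -> 0 <= mu i s.
Proof. apply Hmu. Qed.
Lemma mu_le1 i s : Len n s -> mu i s <= 1.
Proof. intros; eapply SS_point_le; eauto. apply Hmu. Qed.

Lemma tv_spec i j : exists v, SSd (Len n) (fun s => Rabs (mu i s - mu j s)) v /\ 0 <= v <= 2 /\
   tv enc n (mu i) (mu j) = / 2 * v.
Proof.
  destruct (Hmu i) as [Ni Si]. destruct (Hmu j) as [Nj Sj].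
  pose proof (SS_plus _ _ _ _ _ Ni Nj Si Sj) as Sij.
  assert (Hb : forall s, Len n s -> Rabs (mu i s - mu j s) <= mu i s + mu j s).
  { intros s Hs. specialize (Ni s Hs). specialize (Nj s Hs). unfold Rabs; destruct (Rcase_abs _); lra. }
  destruct (SS_exists (Len n) (fun s => Rabs (mu i s - mu j s)) 2) as [v Hv].
  { intros L N I. destruct Sij as [U _]. specialize (U L N I).
    eapply Rle_trans; [|apply U]. apply fsum_le. intros; apply Hb; auto. }
  exists v. split; auto. split. split. eapply SS_nonneg; eauto.
  replace 2 with (1 + 1) by ring. eapply SS_le; [|exact Hv|exact Sij]. auto.
  unfold tv. f_equal. apply (sumSn_SS enc enc_inj); auto. intros s _; apply Rabs_pos.
Qed.

Lemma tv_le1 i j : tv enc n (mu i) (mu j) <= 1.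
Proof. destruct (tv_spec i j) as [v [_ [Hv ->]]]. lra. Qed.
Lemma tv_ge0 i j : 0 <= tv enc n (mu i) (mu j).
Proof. destruct (tv_spec i j) as [v [_ [Hv ->]]]. lra. Qed.

Lemma c_spec (F : list S -> S) i :
  SSd (Len n) (fun s => mu i s * delta (F s) i) (sumSn enc n (fun s => mu i s * delta (F s) i)) /\
  0 <= sumSn enc n (fun s => mu i s * delta (F s) i) <= 1 /\
  SSd (Len n) (fun s => mu i s * (1 - delta (F s) i)) (1 - sumSn enc n (fun s => mu i s * delta (F s) i)).
Proof.
  destruct (Hmu i) as [Ni Si].
  assert (N1 : nonnegD (Len n) (fun s => mu i s * delta (F s) i)).
  { intros s Hs. apply Rmult_le_pos; auto. apply delta_01. }
  assert (N2 : nonnegD (Len n) (fun s => mu i s * (1 - delta (F s) i))).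
  { intros s Hs. apply Rmult_le_pos; auto. pose proof (delta_01 (F s) i). lra. }
  destruct (SS_exists (Len n) (fun s => mu i s * delta (F s) i) 1) as [c Hc].
  { intros L N I. destruct Si as [U _]. eapply Rle_trans; [|apply (U L N I)]. apply fsum_le.
    intros s Hs. pose proof (delta_01 (F s) i). pose proof (Ni s (I s Hs)).
    rewrite <- (Rmult_1_r (mu i s)) at 2. apply Rmult_le_compat_l; lra. }
  assert (E : sumSn enc n (fun s => mu i s * delta (F s) i) = c) by (apply (sumSn_SS enc enc_inj); auto).
  rewrite E. split; auto.
  assert (Hc1 : c <= 1).
  { eapply SS_le; [|exact Hc|exact Si]. intros s Hs. apply mul_le_self; auto. apply delta_01. }
  split. split; auto. eapply SS_nonneg; eauto.
  apply SS_minus with (fun s => mu i s * delta (F s) i); auto.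
  apply SS_ext with (mu i); auto. intros; ring.
Qed.

Lemma tv_lower (F : list S -> S) i j : i <> j ->
  sumSn enc n (fun s => mu i s * delta (F s) i) + sumSn enc n (fun s => mu j s * delta (F s) j) - 1
    <= tv enc n (mu i) (mu j).
Proof.
  intros Hij.
  destruct (c_spec F i) as [Ci [_ Ci']]. destruct (c_spec F j) as [Cj [_ Cj']].
  set (a := sumSn enc n (fun s => mu i s * delta (F s) i)) in *.
  set (cj := sumSn enc n (fun s => mu j s * delta (F s) j)) in *.
  destruct (tv_spec i j) as [v [Hv [_ ->]]].
  destruct (Hmu i) as [Ni Si]. destruct (Hmu j) as [Nj Sj].
  destruct (SS_exists (Len n) (fun s => mu j s * delta (F s) i) 1) as [b Hb].
  { intros L N I. destruct Sj as [U _]. eapply Rle_trans; [|apply (U L N I)]. apply fsum_le.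
    intros s Hs. pose proof (delta_01 (F s) i). pose proof (Nj s (I s Hs)).
    rewrite <- (Rmult_1_r (mu j s)) at 2. apply Rmult_le_compat_l; lra. }
  assert (Nb : nonnegD (Len n) (fun s => mu j s * delta (F s) i)).
  { intros s Hs. apply Rmult_le_pos; auto. apply delta_01. }
  assert (Hb' : SSd (Len n) (fun s => mu j s * (1 - delta (F s) i)) (1 - b)).
  { apply SS_minus with (fun s => mu j s * delta (F s) i); auto.
    intros s Hs. apply Rmult_le_pos; auto. pose proof (delta_01 (F s) i). lra.
    apply SS_ext with (mu j); auto. intros; ring. }
  assert (bcj : b <= 1 - cj).
  { eapply SS_le; [|exact Hb|exact Cj']. intros s Hs. apply Rmult_le_compat_l; auto.
    destruct (excluded_middle_informative (F s = i)) as [E|E].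
    - rewrite E, delta_eq, delta_neq; auto. lra.
    - rewrite (delta_neq _ _ E). pose proof (delta_01 (F s) j). lra. }
  assert (Nd : forall s, Len n s -> 0 <= mu i s * (1 - delta (F s) i)).
  { intros s Hs. apply Rmult_le_pos; auto. pose proof (delta_01 (F s) i). lra. }
  pose proof (SS_plus _ _ _ _ _ Nb Nd Hb Ci') as H1.
  pose proof (SS_plus _ (fun s => Rabs (mu i s - mu j s)) _ _ _ (fun s _ => Rabs_pos _)
     (fun s Hs => Rplus_le_le_0_compat _ _ (Nb s Hs) (Nd s Hs)) Hv H1) as LHS.
  assert (N1 : nonnegD (Len n) (fun s => mu i s * delta (F s) i)).
  { intros s Hs. apply Rmult_le_pos; auto. apply delta_01. }
  assert (N2 : nonnegD (Len n) (fun s => mu j s * (1 - delta (F s) i))).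
  { intros s Hs. apply Rmult_le_pos; auto. pose proof (delta_01 (F s) i). lra. }
  pose proof (SS_plus _ _ _ _ _ N1 N2 Ci Hb') as RHS.
  assert (a + (1 - b) <= v + (b + (1 - a))).
  { eapply SS_le; [|exact RHS|exact LHS]. intros s Hs. simpl.
    destruct (excluded_middle_informative (F s = i)) as [E|E].
    - rewrite E, delta_eq. unfold Rabs; destruct (Rcase_abs _); lra.
    - rewrite (delta_neq _ _ E). unfold Rabs; destruct (Rcase_abs _); lra. }
  lra.
Qed.

Lemma min_spec i j : SSd (Len n) (fun s => Rmin (mu i s) (mu j s)) (1 - tv enc n (mu i) (mu j)).
Proof.
  destruct (tv_spec i j) as [v [Hv [_ ->]]].
  destruct (Hmu i) as [Ni Si]. destruct (Hmu j) as [Nj Sj].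
  replace (1 - / 2 * v) with (/2 * (1 + 1) - /2 * v) by field.
  apply SS_minus with (fun s => / 2 * Rabs (mu i s - mu j s)).
  - intros s _. pose proof (Rabs_pos (mu i s - mu j s)). lra.
  - intros s Hs. apply Rmin_glb; auto.
  - apply SS_scal; auto. lra. intros s _; apply Rabs_pos.
  - apply SS_ext with (fun s => / 2 * (mu i s + mu j s)).
    + intros s Hs. unfold Rmin, Rabs. destruct (Rle_dec _ _); destruct (Rcase_abs _); field_simplify; lra.
    + apply SS_scal. lra. intros s Hs; specialize (Ni s Hs); specialize (Nj s Hs); lra.
      apply SS_plus; auto.
Qed.

Lemma err_bound (A : list S) d i : In i A -> In d A ->
  1 - sumSn enc n (fun s => mu i s * delta (amax (fun j => mu j s) d A) i) <=
  fsum (fun j => if decX i j then 0 else 1 - tv enc n (mu i) (mu j)) A.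
Proof.
  intros Hi Hd. set (F := fun s => amax (fun j => mu j s) d A).
  destruct (c_spec F i) as [_ [_ C']].
  destruct (Hmu i) as [Ni Si].
  assert (HG : SSd (Len n) (fun s => fsum (fun j => (fun j s => if decX i j then 0 else Rmin (mu i s) (mu j s)) j s) A)
     (fsum (fun j => if decX i j then 0 else 1 - tv enc n (mu i) (mu j)) A)).
  { apply SS_fsum.
    - intros j _ s Hs. simpl. destruct (decX i j); [lra|]. apply Rmin_glb; apply Hmu; auto.
    - intros j _. destruct (decX i j). apply SS_zero; auto. apply min_spec. }
  eapply SS_le; [|exact C'|exact HG]. intros s Hs. simpl.
  destruct (amax_spec (fun j => mu j s) d A) as [Hin Hmax].
  fold (F s) in Hin, Hmax.
  destruct (excluded_middle_informative (F s = i)) as [E|E].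
  - rewrite E, delta_eq. rewrite Rminus_diag, Rmult_0_r. apply fsum_nonneg. intros j _.
    destruct (decX i j); [lra|]. apply Rmin_glb; apply Hmu; auto.
  - rewrite (delta_neq _ _ E), Rminus_0_r.
    assert (InF : In (F s) A) by (destruct Hin as [<-|H]; auto).
    apply Rle_trans with (if decX i (F s) then 0 else Rmin (mu i s) (mu (F s) s)).
    + destruct (decX i (F s)); [congruence|]. specialize (Hmax i Hi).
      unfold Rmin. destruct (Rle_dec _ _); lra.
    + apply (fsum_ge_term (fun j => if decX i j then 0 else Rmin (mu i s) (mu j s))); auto.
      intros j _. destruct (decX i j); [lra|]. apply Rmin_glb; apply Hmu; auto.
Qed.

End Prob.
Lemma nat_unbounded (r : R) : exists n : nat, r < INR n.
Proof.
  destruct (archimed r) as [H1 _]. exists (Z.abs_nat (up r)).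
  rewrite INR_IZR_INZ, Zabs2Nat.id_abs, abs_IZR. pose proof (Rle_abs (IZR (up r))). lra.
Qed.

Lemma P_spec {S} (enc : S -> nat) (enc_inj : forall x y, enc x = enc y -> x = y) n (mu : S -> list S -> R)
  (Hmu : forall i, nonnegD (Len n) (mu i) /\ SSd (Len n) (mu i) 1) (pi : S -> R)
  (Hpi0 : forall i, 0 <= pi i) (SSpi : SSd TT pi 1) (F : list S -> S) :
  exists P, sumS enc (fun i => pi i * sumSn enc n (fun s => mu i s * delta (F s) i)) = P /\
    SSd TT (fun i => pi i * sumSn enc n (fun s => mu i s * delta (F s) i)) P /\ P <= 1 /\
    SSd TT (fun i => pi i * (1 - sumSn enc n (fun s => mu i s * delta (F s) i))) (1 - P).
Proof.
  set (c := fun i => sumSn enc n (fun s => mu i s * delta (F s) i)).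
  assert (Hc : forall i, 0 <= c i <= 1) by (intro i; apply (c_spec enc enc_inj n mu Hmu F i)).
  assert (N1 : nonnegD TT (fun i => pi i * c i)) by (intros i _; apply Rmult_le_pos; auto; apply Hc).
  destruct (SS_exists TT (fun i => pi i * c i) 1) as [P HP].
  { intros L N I. destruct SSpi as [U _]. eapply Rle_trans; [|apply (U L N I)]. apply fsum_le.
    intros i _. apply mul_le_self; auto. }
  exists P. split; [apply (sumS_SS enc); auto|]. split; auto. split.
  - eapply SS_le; [|exact HP|exact SSpi]. intros i _. apply mul_le_self; auto.
  - apply SS_minus with (fun i => pi i * c i).
    + exact N1.
    + intros i _. apply Rmult_le_pos; auto. pose proof (Hc i) as Hci; unfold c in Hci; lra.
    + exact HP.
    + apply SS_ext with pi; auto. intros; unfold c; ring.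
Qed.

Lemma fin_event {X} (A : list X) (u : nat -> X -> R) eps :
  (forall x, In x A -> exists N, forall k, (N <= k)%nat -> u k x <= eps) ->
  exists N, forall k, (N <= k)%nat -> fsum (u k) A <= INR (length A) * eps.
Proof.
  induction A as [|a A IH]; intros H.
  - exists O. intros k _. simpl. lra.
  - destruct (H a (or_introl eq_refl)) as [N1 H1].
    destruct IH as [N2 H2]. intros x Hx; apply H; simpl; auto.
    exists (Nat.max N1 N2). intros k Hk. simpl length. rewrite S_INR. simpl.
    specialize (H1 k ltac:(lia)). specialize (H2 k ltac:(lia)). lra.
Qed.

Fixpoint best (g : nat -> bool) (m : nat) : nat :=
  match m with
  | O => O
  | Datatypes.S m' => if g (Datatypes.S m') then Datatypes.S m' else best g m'
  end.

Lemma best_spec g M m : g M = true -> (M <= m)%nat -> (M <= best g m)%nat /\ g (best g m) = true.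
Proof.
  intros HM. induction m; intros Hm; simpl.
  - assert (M = O) by lia. subst. auto.
  - destruct (g (Datatypes.S m)) eqn:E. split; auto.
    destruct (Nat.eq_dec M (Datatypes.S m)). subst; congruence. apply IHm. lia.
Qed.

Lemma fsum_filter_pos {S} (pi : S -> R) (L : list S) : (forall i, 0 <= pi i) ->
  fsum pi (filter (fun x => if Rlt_dec 0 (pi x) then true else false) L) = fsum pi L.
Proof.
  intros H. induction L; simpl; auto. destruct (Rlt_dec 0 (pi a)); simpl; rewrite IHL; auto.
  assert (pi a = 0) by (specialize (H a); lra). rewrite H0; ring.
Qed.

Lemma backward {S} (enc : S -> nat) (enc_inj : forall x y, enc x = enc y -> x = y)
  (pi : S -> R) (Hpi0 : forall i, 0 <= pi i) (SSpi : SSd TT pi 1)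
  (Lk : nat -> S -> list S -> R)
  (Hlaw : forall k, (1 <= k)%nat -> forall i, nonnegD (Len k) (Lk k i) /\ SSd (Len k) (Lk k i) 1)
  (Htv : forall i j, i <> j -> 0 < Rmin (pi i) (pi j) ->
           liminf_is (fun k => tv enc k (Lk k i) (Lk k j)) 1) :
  exists F : nat -> list S -> S,
    liminf_is (fun k => sumS enc (fun i => pi i * sumSn enc k (fun s => Lk k i s * delta (F k s) i))) 1.
Proof.
  assert (HA : forall m : nat, exists A, NoDup A /\ (forall x, In x A -> 0 < pi x) /\
             1 - / (INR m + 1) < fsum pi A).
  { intros m. destruct SSpi as [_ Lo]. destruct (Lo (/ (INR m + 1))) as [L [N [_ HL]]].
    apply Rinv_0_lt_compat. pose proof (pos_INR m); lra.
    exists (filter (fun x => if Rlt_dec 0 (pi x) then true else false) L). split; [|split].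
    - apply NoDup_filter; auto.
    - intros x Hx. apply filter_In in Hx. destruct Hx as [_ Hx]. destruct (Rlt_dec 0 (pi x)); auto; discriminate.
    - rewrite fsum_filter_pos; auto. }
  destruct (choice _ HA) as [Af HAf]. clear HA.
  assert (Hne : forall m, Af m <> []).
  { intros m E. destruct (HAf m) as [_ [_ H]]. rewrite E in H. simpl in H.
    assert (/ (INR m + 1) <= 1). { rewrite <- Rinv_1. apply Rinv_le_contravar. lra. pose proof (pos_INR m); lra. }
    lra. }
  assert (Hs0 : exists s0 : S, True).
  { pose proof (Hne O) as H0. destruct (Af O) as [|s0 rest]. exfalso; apply H0; reflexivity. exists s0; exact Logic.I. }
  destruct Hs0 as [s0 _].
  set (E := fun k (A : list S) => fsum (fun i => fsum (fun j => if decX i j then 0 else 1 - tv enc k (Lk k i) (Lk k j)) A) A).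
  set (gk := fun k m => if Rlt_dec (1 - 2 / (INR m + 1)) (fsum pi (Af m) - E k (Af m)) then true else false).
  set (bk := fun k => best (gk k) k).
  set (F := fun k s => amax (fun j => Lk k j s) (hd s0 (Af (bk k))) (Af (bk k))).
  exists F.
  assert (Hpi1 : forall i, pi i <= 1) by (intro i; eapply SS_point_le; eauto; exact Logic.I).
  assert (Key : forall k, (1 <= k)%nat -> gk k (bk k) = true ->
     1 - 2 / (INR (bk k) + 1) < sumS enc (fun i => pi i * sumSn enc k (fun s => Lk k i s * delta (F k s) i))).
  { intros k Hk Hg. set (m := bk k) in *. set (A := Af m).
    destruct (P_spec enc enc_inj k (Lk k) (Hlaw k Hk) pi Hpi0 SSpi (F k)) as [P [EP [SP _]]].
    rewrite EP.
    unfold gk in Hg. destruct (Rlt_dec _ _) as [Hlt|]; [|discriminate]. fold A in Hlt.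
    destruct (HAf m) as [NA [PA _]]. fold A in NA, PA.
    assert (dA : In (hd s0 A) A). { destruct A as [|a A'] eqn:EA. exfalso; exact (Hne m EA). simpl; auto. }
    apply Rlt_le_trans with (fsum pi A - E k A); auto.
    apply Rle_trans with (fsum (fun i => pi i * sumSn enc k (fun s => Lk k i s * delta (F k s) i)) A).
    2:{ destruct SP as [U _]. apply U; auto. intros x _; exact Logic.I. }
    unfold E. rewrite <- (Rminus_0_r (fsum pi A)) at 1.
    assert (Hsplit : forall L : list S, fsum pi L - fsum (fun i => fsum (fun j => if decX i j then 0 else 1 - tv enc k (Lk k i) (Lk k j)) A) L
       = fsum (fun i => pi i - fsum (fun j => if decX i j then 0 else 1 - tv enc k (Lk k i) (Lk k j)) A) L).
    { induction L; simpl; auto. ring. rewrite <- IHL. ring. }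
    rewrite Rminus_0_r, Hsplit. apply fsum_le. intros i Hi.
    pose proof (err_bound enc enc_inj k (Lk k) (Hlaw k Hk) A (hd s0 A) i Hi dA) as Herr.
    fold (F k) in Herr.
    set (e := fsum (fun j => if decX i j then 0 else 1 - tv enc k (Lk k i) (Lk k j)) A) in *.
    assert (e0 : 0 <= e). { apply fsum_nonneg. intros j _. destruct (decX i j). lra.
      pose proof (tv_le1 enc enc_inj k (Lk k) (Hlaw k Hk) i j). lra. }
    change (fun s => Lk k i s * delta (amax (fun j => Lk k j s) (hd s0 A) A) i) with
      (fun s => Lk k i s * delta (F k s) i) in Herr.
    pose proof (proj1 (proj2 (c_spec enc enc_inj k (Lk k) (Hlaw k Hk) (F k) i))).
    pose proof (Hpi0 i). pose proof (Hpi1 i). nra. }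
  split.
  - intros eps He.
    destruct (nat_unbounded (2 / eps)) as [M HM].
    set (A := Af M). set (a := INR (length A)). set (d := / (INR M + 1)).
    assert (dpos : 0 < d) by (apply Rinv_0_lt_compat; pose proof (pos_INR M); lra).
    set (e1 := d / (a * a + 1)).
    assert (a0 : 0 <= a) by apply pos_INR.
    assert (e1pos : 0 < e1) by (unfold e1; apply Rdiv_lt_0_compat; nra).
    assert (Ev : exists N, forall k, (N <= k)%nat -> E k A <= a * (a * e1)).
    { apply fin_event. intros i Hi. apply fin_event. intros j Hj.
      destruct (decX i j) as [Eij|Nij]. exists O; intros; lra.
      destruct (HAf M) as [_ [PA _]].
      destruct (Htv i j Nij) as [H1 _]. apply Rmin_glb_lt; apply PA; auto.
      destruct (H1 e1 e1pos) as [N HN]. exists N. intros k Hk. specialize (HN k Hk). lra. }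
    destruct Ev as [N0 HN0].
    assert (Hae : a * (a * e1) < d).
    { unfold e1. apply Rmult_lt_reg_r with (a * a + 1). nra.
      field_simplify; try nra. }
    exists (Nat.max N0 (Nat.max M 1)). intros k Hk.
    assert (Hg : gk k M = true).
    { unfold gk. destruct (Rlt_dec _ _) as [|Hn]; auto. exfalso; apply Hn.
      destruct (HAf M) as [_ [_ HM2]]. fold A. fold d in HM2.
      specialize (HN0 k ltac:(lia)).
      replace (2 / (INR M + 1)) with (d + d) by (unfold d; field; pose proof (pos_INR M); lra). unfold A in *. lra. }
    destruct (best_spec (gk k) M k Hg ltac:(lia)) as [Hb1 Hb2].
    pose proof (Key k ltac:(lia) Hb2).
    assert (2 / (INR (bk k) + 1) <= 2 / (INR M + 1)).
    { unfold Rdiv. apply Rmult_le_compat_l. lra. apply Rinv_le_contravar. pose proof (pos_INR M); lra.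
      apply le_INR in Hb1. fold (bk k) in Hb1. lra. }
    assert (2 / (INR M + 1) < eps).
    { apply Rmult_lt_reg_r with (INR M + 1). pose proof (pos_INR M); lra.
      unfold Rdiv. rewrite Rmult_assoc, Rinv_l by (pose proof (pos_INR M); lra).
      apply Rmult_lt_reg_r with (/ eps). apply Rinv_0_lt_compat; lra.
      replace (2 * 1 * / eps) with (2 / eps) by (field; lra).
      replace (eps * (INR M + 1) * / eps) with (INR M + 1) by (field; lra). lra. }
    lra.
  - intros eps He N. exists (Nat.max N 1). split. lia.
    assert (Hk1 : (1 <= Nat.max N 1)%nat) by lia.
    destruct (P_spec enc enc_inj (Nat.max N 1) (Lk (Nat.max N 1)) (Hlaw _ Hk1) pi Hpi0 SSpi (F (Nat.max N 1))) as [P [EP [_ [HP _]]]].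
    rewrite EP. lra.
Qed.
Theorem mainTheorem6 (S : Type) (enc : S -> nat)
  (enc_inj : forall x y : S, enc x = enc y -> x = y)
  (p : R -> S -> S -> R) (T : nat -> tree) (pi : S -> R)
  (Hmarkov : is_markov_semigroup enc p)
  (Hpos : forall k, edges_pos (T k))
  (Hleaves : forall k, (1 <= k)%nat -> nleaves (T k) = k)
  (Hnested : nested T)
  (Hheight : exists H : R, forall k, height (T k) <= H)
  (Hrows : forall t, 0 <= t -> forall i j : S, i <> j -> exists l : S, p t i l <> p t j l)
  (Hpi : is_distr enc pi) :
  (exists F : nat -> list S -> S, consistent enc p T pi F) <->
  (forall i j : S, i <> j -> 0 < Rmin (pi i) (pi j) ->
     liminf_is (fun k => tv enc k (lawT enc p (T k) i) (lawT enc p (T k) j)) 1).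
Proof.
  destruct Hmarkov as [Hp0 [Hp1 _]].
  destruct Hpi as [Hpi0 Hpi1].
  assert (SSpi : SSd TT pi 1) by (apply (has_SS enc); auto; intros i _; auto).
  assert (Hlaw : forall k, (1 <= k)%nat -> forall i,
    nonnegD (Len k) (lawT enc p (T k) i) /\ SSd (Len k) (lawT enc p (T k) i) 1).
  { intros k Hk i. pose proof (lawT_ok enc enc_inj p Hp0 Hp1 (T k) (Hpos k) i) as H.
    rewrite (Hleaves k Hk) in H. exact H. }
  split.
  - intros [F [HF1 _]] i j Hij Hm. split.
    + intros eps He. set (m := Rmin (pi i) (pi j)) in *.
      assert (mi : m <= pi i) by apply Rmin_l. assert (mj : m <= pi j) by apply Rmin_r.
      assert (Hem : 0 < eps * m / 2) by (apply Rmult_lt_0_compat; [apply Rmult_lt_0_compat|]; lra).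
      destruct (HF1 (eps * m / 2) Hem) as [N HN].
      exists (Nat.max N 1). intros k Hk. specialize (HN k ltac:(lia)).
      assert (Hk1 : (1 <= k)%nat) by lia.
      unfold prob_correct in HN.
      destruct (P_spec enc enc_inj k (lawT enc p (T k)) (Hlaw k Hk1) pi Hpi0 SSpi (F k)) as [P [EP [_ [_ HP]]]].
      rewrite EP in HN.
      pose proof (SS_point_le _ _ _ i HP Logic.I) as Ci.
      pose proof (SS_point_le _ _ _ j HP Logic.I) as Cj. cbv beta in Ci, Cj.
      pose proof (tv_lower enc enc_inj k (lawT enc p (T k)) (Hlaw k Hk1) (F k) i j Hij) as H.
      set (ci0 := sumSn enc k (fun s => lawT enc p (T k) i s * delta (F k s) i)) in *.
      set (cj0 := sumSn enc k (fun s => lawT enc p (T k) j s * delta (F k s) j)) in *.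
      assert (ci : 1 - ci0 < eps / 2).
      { apply Rnot_le_lt; intro Hc. assert (pi i * (eps / 2) <= pi i * (1 - ci0)) by (apply Rmult_le_compat_l; lra). nra. }
      assert (cj : 1 - cj0 < eps / 2).
      { apply Rnot_le_lt; intro Hc. assert (pi j * (eps / 2) <= pi j * (1 - cj0)) by (apply Rmult_le_compat_l; lra). nra. }
      lra.
    + intros eps He N. exists (Nat.max N 1). split. lia.
      assert (Hk1 : (1 <= Nat.max N 1)%nat) by lia.
      pose proof (tv_le1 enc enc_inj _ (lawT enc p (T (Nat.max N 1))) (Hlaw _ Hk1) i j). lra.
  - intros Htv.
    destruct (backward enc enc_inj pi Hpi0 SSpi (fun k => lawT enc p (T k)) Hlaw Htv) as [F HF].
    exists F. exact HF.
Qed.
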